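(* Let $G$ be a $k$-degenerate graph with maximum degree $\Delta(G)>1$ and let $H$ be an $l$-degenerate graph. Then $G+_Q H$ is $\max\{2\Delta(G)-2,\,k+l\}$-degenerate.
   Context: A graph is $k$-degenerate if its vertices can be successively deleted so that each deleted vertex has degree at most $k$ at the time of deletion. The line superposition graph $Q(G)$ has vertex set $V(G)\cup E(G)$: it is the subdivision graph $S(G)$ (each edge $e=xy$ of $G$ replaced by the path $x\,e\,y$) together with edges $ee'$ between new vertices $e,e'$ whenever the edges $e,e'$ are adjacent in $G$. The $Q$-sum $G+_Q H$ has vertex set $(V(G)\cup E(G))\times V(H)$, and $(u_1,u_2)\sim(v_1,v_2)$ iff [$u_1=v_1\in V(G)$ and $u_2v_2\in E(H)$] or [$u_2=v_2$ and $u_1v_1\in E(Q(G))$]. *)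

(* Defs.v *)
From mathcomp Require Import all_boot all_order.
Set Implicit Arguments. Unset Strict Implicit. Unset Printing Implicit Defensive.

Section Graphs.
Variable V : finType.

Definition simple_graph (e : rel V) : Prop := symmetric e /\ irreflexive e.

Fixpoint deletion_ok (e : rel V) (k : nat) (s : seq V) : bool :=
  if s is x :: s' then (count (e x) s' <= k) && deletion_ok e k s' else true.

(* k-degenerate: the vertices can be successively deleted (in the order s,
   which lists every vertex exactly once), each having degree <= k at the
   time of deletion *)
Definition degenerate (e : rel V) (k : nat) : Prop :=
  exists s : seq V, perm_eq s (enum V) /\ deletion_ok e k s.

Definition deg (e : rel V) (v : V) : nat := #|[set u | e v u]|.

Definition max_deg (e : rel V) : nat := \max_(v : V) deg e v.

Definition is_edge (e : rel V) (A : {set V}) : bool :=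
  [exists x, exists y, e x y && (A == [set x; y])].

Definition Edge (e : rel V) := {A : {set V} | is_edge e A}.

Definition QV (e : rel V) := (V + Edge e)%type.

(* adjacency in the line superposition graph Q(G):
   subdivision edges x -- e when x is an endpoint of e,
   and e -- e' when e, e' are distinct adjacent edges of G *)
Definition Qadj (e : rel V) (a b : QV e) : bool :=
  match a, b with
  | inl x, inr f => x \in val f
  | inr f, inl x => x \in val f
  | inr f, inr f' => (f != f') && (val f :&: val f' != set0)
  | inl _, inl _ => false
  end.

Definition is_vert (e : rel V) (a : QV e) : bool :=
  if a is inl _ then true else false.
End Graphs.

Definition Qsum (T U : finType) (eG : rel T) (eH : rel U)
  : rel (QV eG * U)%type :=
  fun a b =>
    ((a.1 == b.1) && is_vert a.1 && eH a.2 b.2)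
    || ((a.2 == b.2) && Qadj a.1 b.1).
Arguments Qsum [T U] eG eH _ _.

(* Main.v *)
Require Import Defs.
From mathcomp Require Import all_boot all_order.
From mathcomp Require Import zify.

Module Helpers.
Set Implicit Arguments. Unset Strict Implicit. Unset Printing Implicit Defensive.

Section Gen.
Variable V : finType.
Implicit Types (e : rel V) (k : nat).

Lemma deletion_okP e k s :
  (forall s1 x s2, s = s1 ++ x :: s2 -> count (e x) s2 <= k) -> deletion_ok e k s.
Proof.
elim: s => [//|x s IH] H /=.
apply/andP; split; first exact: (H [::] x s).
apply: IH => s1 y s2 E; apply: (H (x :: s1)); by rewrite E.
Qed.

Lemma deletion_ok_nth e k s x0 i : deletion_ok e k s -> i < size s ->
  count (e (nth x0 s i)) (drop i.+1 s) <= k.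
Proof.
elim: s i => [//|x s IH] [|i] /= /andP[H1 H2] Hi.
- by rewrite drop0.
- exact: IH.
Qed.

Lemma degenerate_of_rank e k (r : V -> nat) :
  (forall x, #|[set y | e x y & r x <= r y]| <= k) -> degenerate e k.
Proof.
move=> Hr.
pose leT := fun a b => r a <= r b.
have tr : transitive leT by move=> a b c; rewrite /leT; apply: leq_trans.
exists (sort leT (enum V)); split; first by rewrite perm_sort perm_refl.
apply: deletion_okP => s1 x s2 Hs.
have Hsort : sorted leT (s1 ++ x :: s2).
  by rewrite -Hs; apply: sort_sorted => a b; exact: leq_total.
have Huniq : uniq (s1 ++ x :: s2) by rewrite -Hs sort_uniq enum_uniq.
have Hall : all (leT x) s2.
  apply: order_path_min => //; exact: (cat_sorted2 Hsort).2.
have Hu2 : uniq s2 by move: Huniq; rewrite cat_uniq /= => /and3P[_ _ /andP[]].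
have Hfu : uniq (filter (e x) s2) by rewrite filter_uniq.
rewrite -size_filter -(card_uniqP Hfu).
apply: leq_trans (Hr x). apply: subset_leq_card.
apply/subsetP => y; rewrite mem_filter inE => /andP[exy ys2].
by rewrite exy; exact: (allP Hall).
Qed.

Lemma rank_of_degenerate e k : irreflexive e -> degenerate e k ->
  exists r : V -> nat, [/\ injective r, forall x, r x < #|V| &
    forall x, #|[set y | e x y & r x <= r y]| <= k].
Proof.
move=> irr [s [Hp Hd]].
have ins x : x \in s by rewrite (perm_mem Hp) mem_enum.
have Hsz : size s = #|V| by rewrite (perm_size Hp) cardE.
have rinj : injective (index^~ s).
  by move=> x y Hxy; rewrite -(nth_index x (ins x)) Hxy nth_index.
exists (index^~ s); split => //.
- by move=> x; rewrite -Hsz index_mem.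
- move=> x.
  have := deletion_ok_nth x Hd (_ : index x s < size s).
  rewrite index_mem ins nth_index // => /(_ isT) H; apply: leq_trans H.
  rewrite -size_filter; apply: leq_trans (card_size _).
  apply: subset_leq_card; apply/subsetP => y; rewrite inE => /andP[exy le].
  rewrite mem_filter exy /=.
  have neq : y != x by apply: contraTneq exy => ->; rewrite irr.
  have lt : index x s < index y s.
    by rewrite ltn_neqAle le andbT; apply: contra neq => /eqP/rinj ->.
  have -> : y = nth y (drop (index x s).+1 s) (index y s - (index x s).+1).
    by rewrite nth_drop subnKC // nth_index.
  apply: mem_nth; rewrite size_drop; have := index_mem y s; rewrite ins; lia.
Qed.

Lemma card_map_le (A B : finType) (S : {set A}) (S' : {set B}) (f : A -> B) :
  {in S &, injective f} -> (forall a, a \in S -> f a \in S') -> #|S| <= #|S'|.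
Proof.
move=> inj sub; rewrite -(card_in_imset inj); apply: subset_leq_card.
by apply/subsetP => b /imsetP[a aS ->]; exact: sub.
Qed.

End Gen.


Section Edges.
Variables (T : finType) (eG : rel T).
Hypothesis symG : symmetric eG.
Hypothesis irrG : irreflexive eG.
Variable rho : T -> nat.
Hypothesis rho_inj : injective rho.

Definition endsP (f : Edge eG) (p : T * T) :=
  eG p.1 p.2 && (val f == [set p.1; p.2]) && (rho p.1 < rho p.2).

Lemma ends_ex f : exists p, endsP f p.
Proof.
case: f => A /=; rewrite /endsP/= => /existsP[a /existsP[b /andP[eab /eqP ->]]].
case: (ltngtP (rho a) (rho b)) => h.
- by exists (a,b); rewrite /= eab eqxx h.
- by exists (b,a); rewrite /= symG eab setUC eqxx h.
- by move/rho_inj: h => eqab; move: eab; rewrite eqab irrG.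
Qed.

Definition lo f := (xchoose (ends_ex f)).1.
Definition hi f := (xchoose (ends_ex f)).2.

Lemma ends_spec f : [/\ eG (lo f) (hi f), val f = [set lo f; hi f] & rho (lo f) < rho (hi f)].
Proof.
have := xchooseP (ends_ex f); rewrite /lo /hi.
move: (xchoose _) => p; rewrite /endsP => /andP[/andP[-> /eqP ->] ->].
by split.
Qed.

Lemma lo_neq_hi f : (lo f == hi f) = false.
Proof. case: (ends_spec f) => _ _ h; apply/eqP => E; move: h; by rewrite E ltnn. Qed.

Definition oth x (f : Edge eG) := if lo f == x then hi f else lo f.

Lemma oth_spec (f : Edge eG) x : x \in val f ->
  [/\ eG x (oth x f), val f = [set x; oth x f] & oth x f != x].
Proof.
case: (ends_spec f) => e vf r; rewrite vf !inE /oth => /orP[]/eqP ->.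
- by rewrite eqxx; split => //; rewrite eq_sym lo_neq_hi.
- rewrite lo_neq_hi; split => //; [by rewrite symG | by rewrite setUC | by rewrite lo_neq_hi].
Qed.



Lemma oth_inj x (f f' : Edge eG) : x \in val f -> x \in val f' -> oth x f = oth x f' -> f = f'.
Proof.
move=> /oth_spec[_ E _] /oth_spec[_ E' _] eo; apply: val_inj; by rewrite E E' eo.
Qed.


Variables (U : finType) (eH : rel U) (g : T -> nat) (h : U -> nat) (M k' d k l : nat).
Hypothesis Hg : forall x, #|[set y | eG x y & g x <= g y]| <= k'.
Hypothesis Hmono : forall x y, rho x < rho y -> g x <= g y.
Hypothesis Hrho : forall x, rho x < M.
Hypothesis HhM : forall u, h u < M.
Hypothesis Hh : forall u, #|[set v | eH u v & h u <= h v]| <= l.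
Hypothesis Hdeg : forall x, #|[set y | eG x y]| <= d.
Hypothesis Hk'd : k' <= d.
Hypothesis Hk'k : k' <= k.
Hypothesis H4 : forall x y, g x < g y -> k' < d.

Definition key (z : QV eG * U) : nat :=
  match z.1 with
  | inl x => (2 * g x) * M + h z.2
  | inr f => (2 * g (lo f)).+1 * M + rho (hi f)
  end.

Lemma key_cmp A B c c' : c < M -> c' < M -> A * M + c <= B * M + c' ->
  A <= B /\ (A = B -> c <= c').
Proof.
move=> hc hc' H; split; last by move=> E; subst; rewrite leq_add2l in H.
rewrite leqNgt; apply/negP => lt.
have : B.+1 * M <= A * M by rewrite leq_mul2r lt orbT.
rewrite mulSn; lia.
Qed.

Lemma vert_bound x u :
  #|[set w | Qsum eG eH (inl x, u) w & key (inl x, u) <= key w]| <= k + l.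
Proof.
set N := [set w | _].
rewrite -(cardsID [set w : QV eG * U | is_vert w.1] N) addnC.
apply: leq_add.
- apply: leq_trans Hk'k; apply: leq_trans (Hg x); apply: (@card_map_le _ _ (N :\: [set w | is_vert w.1]) [set y | eG x y & g x <= g y]
     (fun w : QV eG * U => match w.1 with inr f => oth x f | inl y => y end)).
  + move=> [[y|f] v] [[y'|f'] v']; rewrite !inE /Qsum /key /= //.
    move=> /andP[/andP[/eqP<- xf] _] /andP[/andP[/eqP<- xf'] _] /= E.
    by rewrite (oth_inj xf xf' E).
  + move=> [[y|f] v]; rewrite !inE /Qsum /key /= // => /andP[/andP[_ xf] le].
    have [e _ _] := oth_spec xf; rewrite e /=.
    have [le2 _] := key_cmp (HhM u) (Hrho _) le.
    rewrite /oth; case: eqP => [E|_]; last by lia.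
    have [_ _ r] := ends_spec f; rewrite -E; exact: Hmono r.
- apply: leq_trans (Hh u); apply: (@card_map_le _ _ (N :&: [set w | is_vert w.1]) [set v | eH u v & h u <= h v] (fun w => snd w)).
  + move=> [[y|f] v] [[y'|f'] v']; rewrite !inE /Qsum /key /= ?andbT ?andbF ?orbF //=.
    by move=> /andP[/andP[/eqP[<-] _] _] /andP[/andP[/eqP[<-] _] _] /= ->.
  + move=> [[y|f] v]; rewrite !inE /Qsum /key /= ?andbT ?andbF ?orbF //=.
    move=> /andP[/andP[/eqP[<-] e] le]; rewrite e /=.
    by have [_ ->] := key_cmp (HhM u) (HhM v) le.
Qed.

Lemma g_oth x (f' : Edge eG) : x \in val f' -> g x <= g (lo f') -> g x <= g (oth x f').
Proof.
move=> _ le; rewrite /oth; case: eqP => [E|_] //.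
have [_ _ r] := ends_spec f'; rewrite -E; exact: Hmono r.
Qed.

Definition Xin (a : T) (w : QV eG * U) : bool :=
  match w.1 with inr f' => a \in val f' | inl _ => false end.

Lemma edge_bound f u :
  #|[set w | Qsum eG eH (inr f, u) w & key (inr f, u) <= key w]| <= 2 * d - 2.
Proof.
have [exy vf rxy] := ends_spec f.
set N := [set w | _].
rewrite -(cardsID [set w : QV eG * U | is_vert w.1] N).
set R := N :\: _.
rewrite -(cardsID [set w | Xin (lo f) w] R).
have Ha : #|N :&: [set w | is_vert w.1]| <= (g (lo f) < g (hi f)).
  apply: (@leq_trans #|[set w : QV eG * U | (w == (inl (hi f), u)) && (g (lo f) < g (hi f))]|).
    apply: subset_leq_card; apply/subsetP => -[[z|f'] v]; rewrite !inE /Qsum /key /= ?andbT ?andbF //=.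
    move=> /andP[/andP[/eqP <- zf] le].
    have [le2 _] := key_cmp (Hrho _) (HhM _) le.
    move: zf; rewrite vf !inE => /orP[] /eqP E; rewrite E in le2 *; first by lia.
    rewrite eqxx /=; lia.
  case: (g (lo f) < g (hi f)).
  - apply: leq_trans (subset_leq_card (_ : _ \subset [set (inl (hi f), u)])) _; last by rewrite cards1.
    by apply/subsetP => w; rewrite !inE andbT.
  - rewrite leqn0 cards_eq0; apply/eqP/setP => w; by rewrite !inE andbF.
have Hb : #|R :&: [set w | Xin (lo f) w]| + 1 <= k'.
  have Hy : hi f \in [set y' | eG (lo f) y' & g (lo f) <= g y'] by rewrite inE exy (Hmono rxy).
  have := Hg (lo f); rewrite (cardsD1 (hi f)) Hy /= add1n => HA.
  apply: leq_trans HA; rewrite addn1 ltnS.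
  apply: (@card_map_le _ _ _ _ (fun w : QV eG * U => match w.1 with inr f' => oth (lo f) f' | inl z => z end)).
  + move=> [[z|f'] v] [[z'|f''] v']; rewrite /R !inE /Qsum /Qadj /key /Xin /= ?andbT ?andbF //=.
    move=> /andP[/andP[/and3P[/eqP<- _ _] _] xf'] /andP[/andP[/and3P[/eqP<- _ _] _] xf''] E.
    by rewrite (oth_inj xf' xf'' E).
  + move=> [[z|f'] v]; rewrite /R !inE /Qsum /Qadj /key /Xin /= ?andbT ?andbF //=.
    move=> /andP[/andP[/and3P[_ neq _] le] xf'].
    have [e vf' _] := oth_spec xf'.
    have [le2 _] := key_cmp (Hrho _) (Hrho _) le.
    apply/and3P; split => //.
    * apply/eqP => E; move/negP: neq; apply; apply/eqP/val_inj; by rewrite vf vf' E.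
    * apply: g_oth xf' _; lia.
have Hc : #|R :\: [set w | Xin (lo f) w]| + 1 <= d.
  have hin (f' : Edge eG) : ~~ (lo f \in val f') -> val f :&: val f' != set0 -> hi f \in val f'.
    move=> nl /set0Pn[z]; rewrite inE vf !inE => /andP[/orP[]/eqP -> zf'] //.
    by rewrite zf' in nl.
  have Hx : lo f \in [set z | eG (hi f) z] by rewrite inE symG.
  have := Hdeg (hi f); rewrite (cardsD1 (lo f)) Hx /= add1n => HA.
  apply: leq_trans HA; rewrite addn1 ltnS.
  apply: (@card_map_le _ _ _ _ (fun w : QV eG * U => match w.1 with inr f' => oth (hi f) f' | inl z => z end)).
  + move=> [[z|f'] v] [[z'|f''] v']; rewrite /R !inE /Qsum /Qadj /key /Xin /= ?andbT ?andbF //=.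
    move=> /andP[nl /andP[/and3P[/eqP<- _ ne] _]] /andP[nl' /andP[/and3P[/eqP<- _ ne'] _]] E.
    by rewrite (oth_inj (hin _ nl ne) (hin _ nl' ne') E).
  + move=> [[z|f'] v]; rewrite /R !inE /Qsum /Qadj /key /Xin /= ?andbT ?andbF //=.
    move=> /andP[nl /andP[/and3P[_ _ ne] _]].
    have [e vf' _] := oth_spec (hin _ nl ne).
    rewrite e andbT; apply: contra nl => /eqP E; by rewrite vf' -E !inE eqxx orbT.
have H4' := @H4 (lo f) (hi f).
move: Ha Hb Hc H4'.
set A := #|N :&: _|. set B := #|R :&: _|. set C := #|R :\: _|.
case: (g (lo f) < g (hi f)) => /= Ha Hb Hc H4'.
- have := H4' isT; lia.
- lia.
Qed.

Lemma Qsum_deg : degenerate (Qsum eG eH) (maxn (2 * d - 2) (k + l)).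
Proof.
apply: (degenerate_of_rank (r := key)) => -[[x|f] u].
- exact: leq_trans (vert_bound x u) (leq_maxr _ _).
- exact: leq_trans (edge_bound f u) (leq_maxl _ _).
Qed.

End Edges.

End Helpers.
Import Helpers.

Theorem theorem3 (T U : finType) (eG : rel T) (eH : rel U) (k l : nat) :
  simple_graph eG -> simple_graph eH ->
  degenerate eG k -> 1 < max_deg eG -> degenerate eH l ->
  degenerate (Qsum eG eH) (maxn (2 * max_deg eG - 2) (k + l)).
Proof.
move=> [symG irrG] [symH irrH] dG _ dH.
have [rG [rinj rb rk]] := rank_of_degenerate irrG dG.
have [rH [_ hb hk]] := rank_of_degenerate irrH dH.
have Hdeg x : #|[set y | eG x y]| <= max_deg eG.
  exact: (leq_bigmax (F := fun v => deg eG v) x).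
have HM x : rG x < #|T| + #|U| by have := rb x; lia.
have HhM u : rH u < #|T| + #|U| by have := hb u; lia.
case: (ltnP k (max_deg eG)) => hkd.
- apply: (@Qsum_deg _ _ symG irrG rG rinj _ _ rG rH (#|T| + #|U|) k) => //.
  + by move=> x y /ltnW.
  + by move=> *; apply: ltnW.
- apply: (@Qsum_deg _ _ symG irrG rG rinj _ _ (fun _ => 0) rH (#|T| + #|U|) (max_deg eG)) => //.
  by move=> x; apply: leq_trans (Hdeg x); apply: subset_leq_card; apply/subsetP => y; rewrite !inE andbT.
Qed.
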